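(* The Directed Simplicial Weisfeiler–Leman (D-SWL) test with the restricted update rule $c^{t+1}_\sigma=\operatorname{HASH}\big(c^t_\sigma,c^t_{\mathcal{B}}(\sigma),((c^{ij}_\uparrow)^t(\sigma))_{i,j}\big)$ is as powerful as D-SWL with the generalised update rule $c^{t+1}_\sigma=\operatorname{HASH}\big(c^t_\sigma,c^t_{\mathcal{B}}(\sigma),c^t_{\mathcal{C}}(\sigma),((c^{ij}_\downarrow)^t(\sigma))_{i,j},((c^{ij}_\uparrow)^t(\sigma))_{i,j}\big)$. That is, for any two directed simplicial complexes $\mathcal{K}_1, \mathcal{K}_2$, the restricted test distinguishes them if and only if the generalised test distinguishes them.
   Context: A directed simplicial complex is a pair $\mathcal{K}=(V,\Sigma)$, where $V$ is a finite vertex set and $\Sigma$ is a collection of non-empty ordered tuples of vertices (directed simplices) that is closed under taking non-empty ordered subtuples. A tuple $\sigma=(v_0,\dots,v_n)$ has dimension $n$. For $0\le i\le n$, the face map $d_i(\sigma)$ is the tuple obtained by deleting the $i$-th vertex and keeping the order of the rest; $d_i^{-1}(\sigma)$ is the set of simplices $\rho$ with $d_i(\rho)=\sigma$. For simplices of equal dimension: - $\tau\in\mathcal{A}^{ij}_\downarrow(\sigma)$ if there is a $\kappa$ with $d_i(\sigma)=\kappa=d_j(\tau)$. - $\tau\in\mathcal{A}^{ij}_\uparrow(\sigma)$ if there is a $\kappa$ with $d_i(\kappa)=\sigma$ and $d_j(\kappa)=\tau$. The D-SWL test assigns colours $c^t$ to all simplices, where $c^0$ is the same colour for every simplex and HASH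 is an injective function. For an $n$-simplex $\sigma$, the following colourings are used: - The boundary colouring is the ordered tuple $c^t_{\mathcal{B}}(\sigma)=(c^t_{d_0(\sigma)},\dots,c^t_{d_n(\sigma)})$, which is empty for vertices. - The coboundary colouring is $c^t_{\mathcal{C}}(\sigma)=\bigcup_{i=0}^{n+1}\{\{c^t_\tau:\tau\in d_i^{-1}(\sigma)\}\}$. - The down colouring is $(c^{ij}_\downarrow)^t(\sigma)=\{\{(c^t_\tau,c^t_\kappa):\tau\in\mathcal{A}^{ij}_\downarrow(\sigma),\ d_i(\sigma)=\kappa=d_j(\tau)\}\}$. - The up colouring is $(c^{ij}_\uparrow)^t(\sigma)=\{\{(c^t_\tau,c^t_\kappa):\tau\in\mathcal{A}^{ij}_\uparrow(\sigma),\ d_i(\kappa)=\sigma,\ d_j(\kappa)=\tau\}\}$. The tuple of down colourings ranges over all index pairs $(i,j)$ for which the face maps are defined, and likewise for the up colourings. Colours are refined until they stabilize. The test distinguishes two complexes if their stable colour histograms differ; the two complexes are coloured jointly, i.e., with the same HASH. *)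

(* Defs.v *)
From mathcomp Require Import all_boot.
Set Implicit Arguments. Unset Strict Implicit. Unset Printing Implicit Defensive.

(* Directed simplicial complexes: a simplex is a non-empty tuple (seq) of
   vertices; a simplex of dimension n is a seq of size n+1.  The collection of
   simplices is a duplicate-free seq closed under non-empty subsequences. *)
Definition is_dsc (V : finType) (S : seq (seq V)) : Prop :=
  [/\ uniq S,
      (forall s, s \in S -> s != [::]) &
      (forall s t, t \in S -> subseq s t -> s != [::] -> s \in S)].

Definition face (V : Type) (i : nat) (s : seq V) : seq V :=
  take i s ++ drop i.+1 s.

Definition bnd_col (V C : Type) (c : seq V -> C) (s : seq V) : seq C :=
  if 1 < size s then [seq c (face i s) | i <- iota 0 (size s)] else [::].

Definition cobnd_col (V : eqType) (C : Type) (S : seq (seq V)) (c : seq V -> C)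
  (s : seq V) : seq C :=
  flatten [seq [seq c r | r <- S & (size r == (size s).+1) && (face i r == s)]
          | i <- iota 0 (size s).+1].

Definition down_col (V : eqType) (C : Type) (S : seq (seq V)) (c : seq V -> C)
  (i j : nat) (s : seq V) : seq (C * C) :=
  [seq (c t, c (face i s)) | t <- S &
      [&& size t == size s, 1 < size s & face j t == face i s]].

Definition down_cols (V : eqType) (C : Type) (S : seq (seq V)) (c : seq V -> C)
  (s : seq V) : seq (seq (C * C)) :=
  [seq down_col S c i j s | i <- iota 0 (size s), j <- iota 0 (size s)].

Definition up_col (V : eqType) (C : Type) (S : seq (seq V)) (c : seq V -> C)
  (i j : nat) (s : seq V) : seq (C * C) :=
  [seq (c (face j k), c k) | k <- S & (size k == (size s).+1) && (face i k == s)].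

Definition up_cols (V : eqType) (C : Type) (S : seq (seq V)) (c : seq V -> C)
  (s : seq V) : seq (seq (C * C)) :=
  [seq up_col S c i j s | i <- iota 0 (size s).+1, j <- iota 0 (size s).+1].

(* Signatures fed to HASH.  Multisets are represented by seqs; HASH must be
   injective on multisets, i.e. H a = H b iff the signatures agree, with
   multiset components compared up to permutation. *)
Definition gen_sig (C : Type) : Type :=
  (C * seq C * seq C * seq (seq (C * C)) * seq (seq (C * C)))%type.
Definition res_sig (C : Type) : Type :=
  (C * seq C * seq (seq (C * C)))%type.

Definition gen_sig_eq (C : eqType) (a b : gen_sig C) : Prop :=
  let: (x, bd, cb, dn, up) := a in
  let: (x', bd', cb', dn', up') := b in
  [/\ x = x', bd = bd', perm_eq cb cb', all2 perm_eq dn dn' & all2 perm_eq up up'].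

Definition res_sig_eq (C : eqType) (a b : res_sig C) : Prop :=
  let: (x, bd, up) := a in
  let: (x', bd', up') := b in
  [/\ x = x', bd = bd' & all2 perm_eq up up'].

Definition gen_hash_inj (C : eqType) (H : gen_sig C -> C) : Prop :=
  forall a b, H a = H b <-> gen_sig_eq a b.
Definition res_hash_inj (C : eqType) (H : res_sig C -> C) : Prop :=
  forall a b, H a = H b <-> res_sig_eq a b.

Fixpoint gen_col (V : eqType) (C : Type) (H : gen_sig C -> C) (c0 : C)
  (S : seq (seq V)) (t : nat) : seq V -> C :=
  match t with
  | 0 => fun _ => c0
  | t'.+1 => let c := gen_col H c0 S t' in
      fun s => H (c s, bnd_col c s, cobnd_col S c s, down_cols S c s, up_cols S c s)
  end.

Fixpoint res_col (V : eqType) (C : Type) (H : res_sig C -> C) (c0 : C)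
  (S : seq (seq V)) (t : nat) : seq V -> C :=
  match t with
  | 0 => fun _ => c0
  | t'.+1 => let c := res_col H c0 S t' in
      fun s => H (c s, bnd_col c s, up_cols S c s)
  end.

Definition stable_at (V1 V2 : eqType) (C : Type)
  (col1 : nat -> seq V1 -> C) (S1 : seq (seq V1))
  (col2 : nat -> seq V2 -> C) (S2 : seq (seq V2)) (t : nat) : Prop :=
  [/\ (forall s s', s \in S1 -> s' \in S1 ->
         (col1 t s = col1 t s' <-> col1 t.+1 s = col1 t.+1 s')),
      (forall s s', s \in S2 -> s' \in S2 ->
         (col2 t s = col2 t s' <-> col2 t.+1 s = col2 t.+1 s')) &
      (forall s s', s \in S1 -> s' \in S2 ->
         (col1 t s = col2 t s' <-> col1 t.+1 s = col2 t.+1 s'))].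

Definition histogram (V : eqType) (C : Type) (c : seq V -> C) (S : seq (seq V)) : seq C :=
  [seq c s | s <- S].

Definition distinguishes (V1 V2 : eqType) (C : eqType)
  (col1 : nat -> seq V1 -> C) (S1 : seq (seq V1))
  (col2 : nat -> seq V2 -> C) (S2 : seq (seq V2)) : Prop :=
  exists t, stable_at col1 S1 col2 S2 t /\
            ~~ perm_eq (histogram (col1 t) S1) (histogram (col2 t) S2).

(* Main.v *)
Require Import Defs.
From mathcomp Require Import all_boot zify.
Set Implicit Arguments. Unset Strict Implicit. Unset Printing Implicit Defensive.

Lemma all2_cat (D E : Type) (r : D -> E -> bool) s1 s2 t1 t2 :
  size s1 = size s2 -> all2 r (s1 ++ t1) (s2 ++ t2) = all2 r s1 s2 && all2 r t1 t2.
Proof.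
elim: s1 s2 => [|a s1 IH] [|b s2] //= [] /IH ->; by rewrite andbA.
Qed.

Lemma all2_allpairs (A B D E : Type) (r : D -> E -> bool) (f : A -> B -> D)
  (g : A -> B -> E) s t :
  all2 r [seq f i j | i <- s, j <- t] [seq g i j | i <- s, j <- t] =
  all (fun i => all (fun j => r (f i j) (g i j)) t) s.
Proof.
elim: s => [|i s IH] //; rewrite !allpairs_cons all2_cat ?size_map // IH.
congr andb; clear IH; elim: t => //= j t ->; by [].
Qed.

Lemma all2_allpairsP (D E : Type) (r : D -> E -> bool) (f : nat -> nat -> D)
  (g : nat -> nat -> E) s t :
  all2 r [seq f i j | i <- s, j <- t] [seq g i j | i <- s, j <- t] <->
  (forall i j, i \in s -> j \in t -> r (f i j) (g i j)).
Proof.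
rewrite all2_allpairs; split.
  by move=> /allP H i j /H /allP H2 /H2.
move=> H; apply/allP => i Hi; apply/allP => j Hj; exact: H.
Qed.

Lemma size_allpairs_eq (D : Type) (f : nat -> nat -> D) s t :
  size [seq f i j | i <- s, j <- t] = size s * size t.
Proof.
elim: s => // i s IH; by rewrite allpairs_cons size_cat size_map IH mulSn.
Qed.

Lemma perm_map_refine (T D D' : eqType) (F : T -> D) (G : T -> D') (s s' : seq T) :
  (forall a b, a \in s ++ s' -> b \in s ++ s' -> F a = F b -> G a = G b) ->
  perm_eq (map F s) (map F s') -> perm_eq (map G s) (map G s').
Proof.
case E: (s ++ s') => [|x0 w] H.
  by move: E => /eqP; rewrite -size_eq0 size_cat addn_eq0 !size_eq0 => /andP[/eqP-> /eqP->].
rewrite -E in H.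
pose phi z := G (nth x0 (s ++ s') (index z (map F (s ++ s')))).
have Hphi : forall a, a \in s ++ s' -> G a = phi (F a).
  move=> a Ha; rewrite /phi.
  have Hi : index (F a) (map F (s ++ s')) < size (s ++ s').
    by rewrite -(size_map F) index_mem; apply: map_f.
  apply: H => //; first exact: mem_nth.
  by rewrite -(nth_map x0 (F x0)) // nth_index //; apply: map_f.
move=> P.
have -> : map G s = map phi (map F s).
  rewrite -map_comp; apply/eq_in_map => a Ha; apply: Hphi; by rewrite mem_cat Ha.
have -> : map G s' = map phi (map F s').
  rewrite -map_comp; apply/eq_in_map => a Ha; apply: Hphi; by rewrite mem_cat Ha orbT.
exact: perm_map.
Qed.

Definition sumf (A B D : Type) (F : A -> D) (F' : B -> D) (x : A + B) : D :=
  match x with inl a => F a | inr b => F' b end.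

Lemma perm_map_refine2 (A B D D' : eqType) (F : A -> D) (F' : B -> D)
  (G : A -> D') (G' : B -> D') (s : seq A) (s' : seq B) :
  (forall a b, a \in s -> b \in s -> F a = F b -> G a = G b) ->
  (forall a b, a \in s' -> b \in s' -> F' a = F' b -> G' a = G' b) ->
  (forall a b, a \in s -> b \in s' -> F a = F' b -> G a = G' b) ->
  perm_eq (map F s) (map F' s') -> perm_eq (map G s) (map G' s').
Proof.
move=> H1 H2 H3.
have e1 : forall (X : Type) (K : A -> X) (K' : B -> X), map K s = map (sumf K K') (map inl s).
  by move=> X K K'; rewrite -map_comp.
have e2 : forall (X : Type) (K : A -> X) (K' : B -> X), map K' s' = map (sumf K K') (map inr s').
  by move=> X K K'; rewrite -map_comp.
rewrite (e1 _ F F') (e2 _ F F') (e1 _ G G') (e2 _ G G').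
have Hl : forall (z : A), inl z \in [seq inr x | x <- s'] = false
  by move=> z; apply/negbTE/mapP => -[].
have Hr : forall (z : B), inr z \in [seq inl x | x <- s] = false
  by move=> z; apply/negbTE/mapP => -[].
apply: perm_map_refine => -[a|a] [b|b]; rewrite !mem_cat /=;
  rewrite ?(mem_map (@inl_inj A B)) ?(mem_map (@inr_inj A B)) ?Hl ?Hr /= ?orbF.
- exact: H1.
- exact: H3.
- by move=> Ha Hb /esym E; apply/esym; apply: H3.
- exact: H2.
Qed.

Lemma map_eq_refine2 (A B : eqType) (D D' : Type) (F : A -> D) (F' : B -> D)
  (G : A -> D') (G' : B -> D') (s : seq A) (s' : seq B) :
  (forall a b, a \in s -> b \in s' -> F a = F' b -> G a = G' b) ->
  map F s = map F' s' -> map G s = map G' s'.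
Proof.
elim: s s' => [|a s IH] [|b s'] //= H [] E1 E2.
rewrite (H a b) ?mem_head ?(IH s') //.
by move=> x y Hx Hy; apply: H; rewrite inE ?Hx ?Hy orbT.
Qed.

Lemma all2_size_eq (D E : Type) (r : D -> E -> bool) s t : all2 r s t -> size s = size t.
Proof. by rewrite all2E => /andP[/eqP]. Qed.

Lemma sq_inj n m : n.+1 * n.+1 = m.+1 * m.+1 -> n = m.
Proof. nia. Qed.

Lemma up_cols_size (V : eqType) (C : Type) (S : seq (seq V)) (c : seq V -> C) s :
  size (up_cols S c s) = (size s).+1 * (size s).+1.
Proof. by rewrite /up_cols size_allpairs_eq size_iota. Qed.

Lemma up_size (Va Vb : eqType) (C : eqType) Sa Sb (ca : seq Va -> C) (cb : seq Vb -> C) x y :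
  all2 perm_eq (up_cols Sa ca x) (up_cols Sb cb y) -> size x = size y.
Proof. by move/all2_size_eq; rewrite !up_cols_size => /sq_inj. Qed.

Lemma size_face (V : Type) i (s : seq V) : i < size s -> size (face i s) = (size s).-1.
Proof. rewrite /face size_cat size_take size_drop => h; rewrite h; lia. Qed.

Lemma face_subseq (V : eqType) i (s : seq V) : subseq (face i s) s.
Proof.
rewrite /face; have := cat_subseq (subseq_refl (take i s)) (drop_subseq (drop i s) 1).
by rewrite drop_drop cat_take_drop add1n.
Qed.

Lemma face_mem (V : finType) (S : seq (seq V)) k j :
  is_dsc S -> k \in S -> j < size k -> 1 < size k -> face j k \in S.
Proof.
move=> [_ _ hc] hk hj h1; apply: (hc _ k hk (face_subseq j k)).
by rewrite -size_eq0 size_face //; lia.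
Qed.

Definition facesL (V : Type) (s : seq V) : seq (seq V) :=
  if 1 < size s then [seq face i s | i <- iota 0 (size s)] else [::].

Lemma bnd_colE (V C : Type) (c : seq V -> C) s : bnd_col c s = map c (facesL s).
Proof. by rewrite /bnd_col /facesL; case: ifP => // _; rewrite -map_comp. Qed.

Lemma facesL_mem (V : finType) (S : seq (seq V)) x a :
  is_dsc S -> x \in S -> a \in facesL x -> a \in S.
Proof.
rewrite /facesL => dS hx; case: ifP => // h1 /mapP [i]; rewrite mem_iota => /andP[_ hi] ->.
exact: face_mem.
Qed.

Definition refines (Va Vb : Type) (C D : Type) (Pa : seq Va -> Prop) (Pb : seq Vb -> Prop)
  (ca : seq Va -> C) (cb : seq Vb -> C) (da : seq Va -> D) (db : seq Vb -> D) : Prop :=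
  [/\ forall a b, Pa a -> Pa b -> ca a = ca b -> da a = da b,
      forall a b, Pb a -> Pb b -> cb a = cb b -> db a = db b &
      forall a b, Pa a -> Pb b -> ca a = cb b -> da a = db b].

Lemma up_cols_tr (Va Vb : eqType) (C D : eqType) Sa Sb (Pa : seq Va -> Prop) (Pb : seq Vb -> Prop)
  (ca : seq Va -> C) cb (da : seq Va -> D) db x y :
  refines Pa Pb ca cb da db ->
  (forall i j k, k \in Sa -> (size k == (size x).+1) && (face i k == x) -> j < (size x).+1 ->
     Pa k /\ Pa (face j k)) ->
  (forall i j k, k \in Sb -> (size k == (size y).+1) && (face i k == y) -> j < (size y).+1 ->
     Pb k /\ Pb (face j k)) ->
  all2 perm_eq (up_cols Sa ca x) (up_cols Sb cb y) -> all2 perm_eq (up_cols Sa da x) (up_cols Sb db y).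
Proof.
move=> [h1 h2 h3] cla clb H; have Exy := up_size H; move: H.
rewrite /up_cols -Exy !all2_allpairsP => H i j Hi Hj.
have hj : j < (size x).+1 by move: Hj; rewrite mem_iota.
move: (H i j Hi Hj); rewrite /up_col; apply: perm_map_refine2 => a b; rewrite !mem_filter.
- move=> /andP[pa sa] /andP[pb sb] [e1 e2].
  have [qa qa'] := cla i j a sa pa hj; have [qb qb'] := cla i j b sb pb hj.
  by rewrite (h1 _ _ qa qb e2) (h1 _ _ qa' qb' e1).
- move=> /andP[pa sa] /andP[pb sb] [e1 e2]; rewrite Exy in hj.
  have [qa qa'] := clb i j a sa pa hj; have [qb qb'] := clb i j b sb pb hj.
  by rewrite (h2 _ _ qa qb e2) (h2 _ _ qa' qb' e1).
- move=> /andP[pa sa] /andP[pb sb] [e1 e2].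
  have [qa qa'] := cla i j a sa pa hj; rewrite Exy in hj; have [qb qb'] := clb i j b sb pb hj.
  by rewrite (h3 _ _ qa qb e2) (h3 _ _ qa' qb' e1).
Qed.

Lemma perm_flatten2 (T : eqType) (ss ss' : seq (seq T)) :
  all2 perm_eq ss ss' -> perm_eq (flatten ss) (flatten ss').
Proof.
elim: ss ss' => [|s ss IH] [|s' ss'] //= /andP[h1 h2]; exact: perm_cat h1 (IH _ h2).
Qed.

Lemma all2_map_same (A : eqType) (D E : Type) (r : D -> E -> bool) (f : A -> D) (g : A -> E) l :
  (forall i, i \in l -> r (f i) (g i)) -> all2 r (map f l) (map g l).
Proof.
elim: l => //= i l IH H; rewrite H ?mem_head //=; apply: IH => j hj; apply: H.
by rewrite inE hj orbT.
Qed.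

Lemma cob_from_up (Va Vb : eqType) (C D : eqType) Sa Sb (Pa : seq Va -> Prop) (Pb : seq Vb -> Prop)
  (ca : seq Va -> C) cb (da : seq Va -> D) db x y :
  refines Pa Pb ca cb da db ->
  (forall k, k \in Sa -> Pa k) -> (forall k, k \in Sb -> Pb k) ->
  all2 perm_eq (up_cols Sa ca x) (up_cols Sb cb y) -> perm_eq (cobnd_col Sa da x) (cobnd_col Sb db y).
Proof.
move=> [h1 h2 h3] cla clb H; have Exy := up_size H; move: H.
rewrite /up_cols /cobnd_col -Exy all2_allpairsP => H.
apply: perm_flatten2; apply: all2_map_same => i Hi.
have H0 : 0 \in iota 0 (size x).+1 by rewrite mem_iota.
move: (H i 0 Hi H0); rewrite /up_col -Exy.
apply: perm_map_refine2 => a b; rewrite !mem_filter.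
- move=> /andP[_ sa] /andP[_ sb] [_ e2]; exact: h1 (cla _ sa) (cla _ sb) e2.
- move=> /andP[_ sa] /andP[_ sb] [_ e2]; exact: h2 (clb _ sa) (clb _ sb) e2.
- move=> /andP[_ sa] /andP[_ sb] [_ e2]; exact: h3 (cla _ sa) (clb _ sb) e2.
Qed.

Lemma down_col_nil (V : eqType) (C : Type) (S : seq (seq V)) (c : seq V -> C) i j x :
  ~~ (1 < size x) -> down_col S c i j x = [::].
Proof.
move=> h; rewrite /down_col (@eq_filter _ _ pred0) ?filter_pred0 // => t.
by rewrite (negbTE h) andbF.
Qed.

Lemma dn_filterE (V : eqType) (S : seq (seq V)) (x : seq V) i j :
  1 < size x -> i < size x ->
  [seq t <- S | [&& size t == size x, 1 < size x & face j t == face i x]] =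
  [seq t <- S | (size t == (size (face i x)).+1) && (face j t == face i x)].
Proof.
move=> hx hi; apply: eq_filter => t; rewrite hx size_face // prednK //; lia.
Qed.

Lemma dn_from_bnd (Va Vb : eqType) (C D E : eqType) Sa Sb (Pa : seq Va -> Prop) (Pb : seq Vb -> Prop)
  (ca : seq Va -> C) cb (da : seq Va -> D) db (ea : seq Va -> E) eb x y :
  refines Pa Pb ca cb da db ->
  (forall k, k \in Sa -> Pa k) -> (forall k, k \in Sb -> Pb k) ->
  (forall ka kb, ea ka = eb kb -> all2 perm_eq (up_cols Sa ca ka) (up_cols Sb cb kb)) ->
  (forall ka kb, ea ka = eb kb -> da ka = db kb) ->
  size x = size y -> bnd_col ea x = bnd_col eb y ->
  all2 perm_eq (down_cols Sa da x) (down_cols Sb db y).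
Proof.
move=> [h1 h2 h3] cla clb He Hd Exy Hb.
rewrite /down_cols -Exy all2_allpairsP => i j Hi Hj.
case: (ltnP 1 (size x)) => hx; last first.
  have hx' : ~~ (1 < size x) by rewrite -leqNgt.
  have hy' : ~~ (1 < size y) by rewrite -Exy.
  by rewrite (down_col_nil Sa da i j hx') (down_col_nil Sb db i j hy').
have hi : i < size x by move: Hi; rewrite mem_iota.
have hj : j < size x by move: Hj; rewrite mem_iota.
move: Hb; rewrite /bnd_col -Exy hx => /eq_in_map /(_ i Hi) Ei.
have := He _ _ Ei; rewrite /up_cols !size_face -?Exy // prednK; last lia.
rewrite all2_allpairsP => /(_ j 0 Hj) H0.
have : perm_eq (up_col Sa ca j 0 (face i x)) (up_col Sb cb j 0 (face i y)).
  by apply: H0; rewrite mem_iota; lia.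
rewrite /up_col /down_col (dn_filterE Sa j hx hi).
have hy : 1 < size y by rewrite -Exy.
have hiy : i < size y by rewrite -Exy.
rewrite (dn_filterE Sb j hy hiy) -(Hd _ _ Ei).
apply: perm_map_refine2 => a b; rewrite !mem_filter.
- move=> /andP[_ sa] /andP[_ sb] [_ e2]; by rewrite (h1 _ _ (cla _ sa) (cla _ sb) e2).
- move=> /andP[_ sa] /andP[_ sb] [_ e2]; by rewrite (h2 _ _ (clb _ sa) (clb _ sb) e2).
- move=> /andP[_ sa] /andP[_ sb] [_ e2]; by rewrite (h3 _ _ (cla _ sa) (clb _ sb) e2).
Qed.

Lemma res_eqP (C : eqType) (H : res_sig C -> C) (c0 : C) (hH : res_hash_inj H)
  (Va Vb : eqType) (Sa : seq (seq Va)) (Sb : seq (seq Vb)) t x y :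
  res_col H c0 Sa t.+1 x = res_col H c0 Sb t.+1 y <->
  [/\ res_col H c0 Sa t x = res_col H c0 Sb t y,
      bnd_col (res_col H c0 Sa t) x = bnd_col (res_col H c0 Sb t) y &
      all2 perm_eq (up_cols Sa (res_col H c0 Sa t) x) (up_cols Sb (res_col H c0 Sb t) y)].
Proof. exact: hH. Qed.

Lemma gen_eqP (C : eqType) (H : gen_sig C -> C) (c0 : C) (hH : gen_hash_inj H)
  (Va Vb : eqType) (Sa : seq (seq Va)) (Sb : seq (seq Vb)) t x y :
  gen_col H c0 Sa t.+1 x = gen_col H c0 Sb t.+1 y <->
  [/\ gen_col H c0 Sa t x = gen_col H c0 Sb t y,
      bnd_col (gen_col H c0 Sa t) x = bnd_col (gen_col H c0 Sb t) y,
      perm_eq (cobnd_col Sa (gen_col H c0 Sa t) x) (cobnd_col Sb (gen_col H c0 Sb t) y),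
      all2 perm_eq (down_cols Sa (gen_col H c0 Sa t) x) (down_cols Sb (gen_col H c0 Sb t) y) &
      all2 perm_eq (up_cols Sa (gen_col H c0 Sa t) x) (up_cols Sb (gen_col H c0 Sb t) y)].
Proof. exact: hH. Qed.

Lemma univ_ref (Va Vb : Type) (C D : Type) (ca : seq Va -> C) cb (da : seq Va -> D) db :
  (forall a b, ca a = ca b -> da a = da b) ->
  (forall a b, cb a = cb b -> db a = db b) ->
  (forall a b, ca a = cb b -> da a = db b) ->
  refines (fun _ : seq Va => True) (fun _ : seq Vb => True) ca cb da db.
Proof. by move=> h1 h2 h3; split=> a b _ _; [apply: h1|apply: h2|apply: h3]. Qed.

Lemma gen_res (C1 C2 : eqType) (H1 : res_sig C1 -> C1) (H2 : gen_sig C2 -> C2) (c1 : C1) (c2 : C2)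
  (hH1 : res_hash_inj H1) (hH2 : gen_hash_inj H2) t :
  forall (Va Vb : eqType) (Sa : seq (seq Va)) (Sb : seq (seq Vb)) x y,
  gen_col H2 c2 Sa t x = gen_col H2 c2 Sb t y -> res_col H1 c1 Sa t x = res_col H1 c1 Sb t y.
Proof.
elim: t => [//|t IH] Va Vb Sa Sb x y /(gen_eqP _ hH2) [E0 Eb Ec Ed Eu].
apply/(res_eqP _ hH1); split.
- exact: IH.
- rewrite !bnd_colE in Eb *; apply: map_eq_refine2 Eb => a b _ _; exact: IH.
- apply: (up_cols_tr (univ_ref _ _ _)) Eu => //; exact: IH.
Qed.

Lemma res_mono (C : eqType) (H : res_sig C -> C) (c0 : C) (hH : res_hash_inj H)
  (Va Vb : eqType) (Sa : seq (seq Va)) (Sb : seq (seq Vb)) t x y :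
  res_col H c0 Sa t.+1 x = res_col H c0 Sb t.+1 y -> res_col H c0 Sa t x = res_col H c0 Sb t y.
Proof. by move/(res_eqP _ hH) => []. Qed.

Lemma gen_mono (C : eqType) (H : gen_sig C -> C) (c0 : C) (hH : gen_hash_inj H)
  (Va Vb : eqType) (Sa : seq (seq Va)) (Sb : seq (seq Vb)) t x y :
  gen_col H c0 Sa t.+1 x = gen_col H c0 Sb t.+1 y -> gen_col H c0 Sa t x = gen_col H c0 Sb t y.
Proof. by move/(gen_eqP _ hH) => []. Qed.

Lemma res_gen (C1 C2 : eqType) (H1 : res_sig C1 -> C1) (H2 : gen_sig C2 -> C2) (c1 : C1) (c2 : C2)
  (hH1 : res_hash_inj H1) (hH2 : gen_hash_inj H2) t :
  forall (Va Vb : eqType) (Sa : seq (seq Va)) (Sb : seq (seq Vb)) x y,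
  res_col H1 c1 Sa t.*2 x = res_col H1 c1 Sb t.*2 y -> gen_col H2 c2 Sa t x = gen_col H2 c2 Sb t y.
Proof.
elim: t => [//|t IH] Va Vb Sa Sb x y; rewrite doubleS => E2.
have Hr : forall (Va Vb : eqType) (Sa : seq (seq Va)) (Sb : seq (seq Vb)) a b,
    res_col H1 c1 Sa t.*2.+1 a = res_col H1 c1 Sb t.*2.+1 b -> gen_col H2 c2 Sa t a = gen_col H2 c2 Sb t b.
  by move=> ? ? ? ? a b /(res_mono hH1); apply: IH.
move: (E2) => /(res_eqP _ hH1) [E1 Eb Eu].
have Exy := up_size Eu.
apply/(gen_eqP _ hH2); split.
- exact: Hr.
- rewrite !bnd_colE in Eb *; apply: map_eq_refine2 Eb => a b _ _; exact: Hr.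
- apply: (cob_from_up (univ_ref _ _ _)) Eu => //; exact: Hr.
- apply: (dn_from_bnd (univ_ref _ _ _) _ _ _ _ Exy Eb) => //; try exact: IH.
    by move=> ka kb /(res_eqP _ hH1) [].
  exact: Hr.
- apply: (up_cols_tr (univ_ref _ _ _)) Eu => //; exact: Hr.
Qed.

Lemma dsc_nonempty (V : finType) (S : seq (seq V)) x : is_dsc S -> x \in S -> 0 < size x.
Proof. by move=> [_ h _] /h; rewrite lt0n size_eq0. Qed.

Lemma up_closure (V : finType) (S : seq (seq V)) x :
  is_dsc S -> x \in S ->
  forall i j k, k \in S -> (size k == (size x).+1) && (face i k == x) -> j < (size x).+1 ->
     k \in S /\ face j k \in S.
Proof.
move=> dS hx i j k hk /andP[/eqP hs _] hj; split => //.
have := dsc_nonempty dS hx => h0.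
apply: face_mem => //; rewrite hs //; lia.
Qed.

Lemma res_prop (C : eqType) (H : res_sig C -> C) (c0 : C) (hH : res_hash_inj H)
  (Va Vb : finType) (Sa : seq (seq Va)) (Sb : seq (seq Vb)) (dSa : is_dsc Sa) (dSb : is_dsc Sb) t :
  refines (fun a => a \in Sa) (fun b => b \in Sb) (res_col H c0 Sa t) (res_col H c0 Sb t)
    (res_col H c0 Sa t.+1) (res_col H c0 Sb t.+1) ->
  forall x y, x \in Sa -> y \in Sb -> res_col H c0 Sa t.+1 x = res_col H c0 Sb t.+1 y ->
  res_col H c0 Sa t.+2 x = res_col H c0 Sb t.+2 y.
Proof.
move=> Hr x y hx hy E; move: (E) => /(res_eqP _ hH) [E0 Eb Eu].
have [h1 h2 h3] := Hr.
apply/(res_eqP _ hH); split => //.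
- rewrite !bnd_colE in Eb *; apply: map_eq_refine2 Eb => a b ha hb; apply: h3.
  + exact: facesL_mem ha.
  + exact: facesL_mem hb.
- apply: (up_cols_tr Hr) Eu; exact: up_closure.
Qed.

Lemma gen_prop (C : eqType) (H : gen_sig C -> C) (c0 : C) (hH : gen_hash_inj H)
  (Va Vb : finType) (Sa : seq (seq Va)) (Sb : seq (seq Vb)) (dSa : is_dsc Sa) (dSb : is_dsc Sb) t :
  refines (fun a => a \in Sa) (fun b => b \in Sb) (gen_col H c0 Sa t) (gen_col H c0 Sb t)
    (gen_col H c0 Sa t.+1) (gen_col H c0 Sb t.+1) ->
  forall x y, x \in Sa -> y \in Sb -> gen_col H c0 Sa t.+1 x = gen_col H c0 Sb t.+1 y ->
  gen_col H c0 Sa t.+2 x = gen_col H c0 Sb t.+2 y.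
Proof.
move=> Hr x y hx hy E; move: (E) => /(gen_eqP _ hH) [E0 Eb Ec Ed Eu].
have [h1 h2 h3] := Hr.
have Exy := up_size Eu.
have Eb' : bnd_col (gen_col H c0 Sa t.+1) x = bnd_col (gen_col H c0 Sb t.+1) y.
  rewrite !bnd_colE in Eb *; apply: map_eq_refine2 Eb => a b ha hb; apply: h3.
  + exact: facesL_mem ha.
  + exact: facesL_mem hb.
apply/(gen_eqP _ hH); split => //.
- exact: (cob_from_up Hr) Eu.
- apply: (dn_from_bnd Hr _ _ _ _ Exy Eb') => //.
  by move=> ka kb /(gen_eqP _ hH) [].
- apply: (up_cols_tr Hr) Eu; exact: up_closure.
Qed.

Definition subF (X : eqType) (L : seq X) (C D : Type) (f : X -> C) (g : X -> D) : Prop :=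
  forall x y, x \in L -> y \in L -> f x = f y -> g x = g y.

Lemma subF_trans (X : eqType) (L : seq X) (C D E : Type) (f : X -> C) (g : X -> D) (h : X -> E) :
  subF L f g -> subF L g h -> subF L f h.
Proof. move=> H1 H2 x y hx hy Exy; exact: H2 (H1 _ _ hx hy Exy). Qed.

Lemma hist_eq (X : eqType) (L : seq X) (C D : eqType) (f : X -> C) (g : X -> D) A B :
  {subset A ++ B <= L} -> subF L f g -> subF L g f ->
  perm_eq (map f A) (map f B) <-> perm_eq (map g A) (map g B).
Proof.
move=> hs H1 H2; split; apply: perm_map_refine => a b ha hb;
  [exact: H1 (hs _ ha) (hs _ hb) | exact: H2 (hs _ ha) (hs _ hb)].
Qed.

Lemma abstract_main (X : eqType) (L A B : seq X) (C1 C2 : eqType)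
  (Kr : nat -> X -> C1) (Kg : nat -> X -> C2) :
  {subset A ++ B <= L} ->
  (forall t, subF L (Kr t.+1) (Kr t)) ->
  (forall t, subF L (Kg t.+1) (Kg t)) ->
  (forall t, subF L (Kg t) (Kr t)) ->
  (forall t, subF L (Kr t.*2) (Kg t)) ->
  (forall t, subF L (Kr t) (Kr t.+1) -> subF L (Kr t.+1) (Kr t.+2)) ->
  (forall t, subF L (Kg t) (Kg t.+1) -> subF L (Kg t.+1) (Kg t.+2)) ->
  (exists t, subF L (Kr t) (Kr t.+1) /\ ~~ perm_eq (map (Kr t) A) (map (Kr t) B)) <->
  (exists t, subF L (Kg t) (Kg t.+1) /\ ~~ perm_eq (map (Kg t) A) (map (Kg t) B)).
Proof.
move=> hAB monoR monoG GR RG propR propG.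
have SF : forall (C : Type) (K : nat -> X -> C),
    (forall t, subF L (K t) (K t.+1) -> subF L (K t.+1) (K t.+2)) ->
    forall t, subF L (K t) (K t.+1) -> forall n, subF L (K t) (K (n + t)) /\ subF L (K (n + t)) (K (n + t).+1).
  move=> C K prop t st; elim=> [|n [IH1 IH2]]; first by split => // x y.
  rewrite addSn; split; [exact: subF_trans IH1 IH2 | exact: prop].
split.
- move=> [t [st hd]]; have SFr := SF _ _ propR t st.
  exists t; split.
  + apply: subF_trans (GR t) _; apply: subF_trans (RG t.+1).
    have -> : (t.+1).*2 = t.+2 + t by rewrite -addnn addSn addnS.
    exact: (SFr t.+2).1.
  + have H2 : subF L (Kr t) (Kg t).
      apply: subF_trans (RG t); rewrite -addnn; exact: (SFr t).1.
    have HE := hist_eq hAB H2 (GR t).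
    by apply: contra hd => /HE.2.
- move=> [t [st hd]]; have SFg := SF _ _ propG t st.
  exists t.*2; split.
  + apply: subF_trans (RG t) _; apply: subF_trans (GR (t.*2).+1).
    have -> : (t.*2).+1 = t.+1 + t by rewrite -addnn addSn.
    exact: (SFg t.+1).1.
  + have H2 : subF L (Kg t) (Kr t.*2).
      apply: subF_trans (GR t.*2); rewrite -addnn; exact: (SFg t).1.
    have HE := hist_eq hAB (RG t) H2.
    by apply: contra hd => /HE.1.
Qed.

Lemma sumf_l (A B D : Type) (f : A -> D) (g : B -> D) a : sumf f g (inl a) = f a.
Proof. by []. Qed.
Lemma sumf_r (A B D : Type) (f : A -> D) (g : B -> D) a : sumf f g (inr a) = g a.
Proof. by []. Qed.

Definition LL (V1 V2 : eqType) (S1 : seq (seq V1)) (S2 : seq (seq V2)) : seq (seq V1 + seq V2) :=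
  map inl S1 ++ map inr S2.

Lemma memL_l (V1 V2 : eqType) (S1 : seq (seq V1)) (S2 : seq (seq V2)) a :
  (inl a \in LL S1 S2) = (a \in S1).
Proof.
rewrite /LL mem_cat (mem_map (@inl_inj _ _)).
have -> : (inl a \in [seq inr x | x <- S2]) = false by apply/negbTE/mapP => -[].
by rewrite orbF.
Qed.

Lemma memL_r (V1 V2 : eqType) (S1 : seq (seq V1)) (S2 : seq (seq V2)) a :
  (inr a \in LL S1 S2) = (a \in S2).
Proof.
rewrite /LL mem_cat (mem_map (@inr_inj _ _)).
have -> : (inr a \in [seq inl x | x <- S1]) = false by apply/negbTE/mapP => -[].
by [].
Qed.

Lemma dist_K (V1 V2 : eqType) (C : eqType) (col1 : nat -> seq V1 -> C) (col2 : nat -> seq V2 -> C) S1 S2 :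
  (forall t, subF (LL S1 S2) (sumf (col1 t.+1) (col2 t.+1)) (sumf (col1 t) (col2 t))) ->
  distinguishes col1 S1 col2 S2 <->
  exists t, subF (LL S1 S2) (sumf (col1 t) (col2 t)) (sumf (col1 t.+1) (col2 t.+1)) /\
    ~~ perm_eq (map (sumf (col1 t) (col2 t)) (map inl S1)) (map (sumf (col1 t) (col2 t)) (map inr S2)).
Proof.
move=> mono.
have hm : forall t, map (sumf (col1 t) (col2 t)) (map inl S1) = histogram (col1 t) S1 /\
                    map (sumf (col1 t) (col2 t)) (map inr S2) = histogram (col2 t) S2.
  by move=> t; rewrite -!map_comp.
rewrite /distinguishes; split => -[t [st hd]]; exists t; (split; last by move: hd; rewrite ?(hm t).1 ?(hm t).2).
- case: st => h1 h2 h3 [a|a] [b|b]; rewrite ?memL_l ?memL_r ?sumf_l ?sumf_r => ha hb E.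
  + exact: (h1 a b ha hb).1.
  + exact: (h3 a b ha hb).1.
  + apply/esym; apply: (h3 b a hb ha).1; apply/esym; assumption.
  + exact: (h2 a b ha hb).1.
- split => s s' hs hs'; split.
  + by apply: (st (inl s) (inl s')); rewrite memL_l.
  + by apply: (mono t (inl s) (inl s')); rewrite memL_l.
  + by apply: (st (inr s) (inr s')); rewrite memL_r.
  + by apply: (mono t (inr s) (inr s')); rewrite memL_r.
  + by apply: (st (inl s) (inr s')); rewrite ?memL_l ?memL_r.
  + by apply: (mono t (inl s) (inr s')); rewrite ?memL_l ?memL_r.
Qed.

Lemma refs (V1 V2 : eqType) (C D : Type) (S1 : seq (seq V1)) (S2 : seq (seq V2))
  (c1 : seq V1 -> C) (c2 : seq V2 -> C) (d1 : seq V1 -> D) (d2 : seq V2 -> D) :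
  subF (LL S1 S2) (sumf c1 c2) (sumf d1 d2) ->
  [/\ refines (fun a => a \in S1) (fun b => b \in S2) c1 c2 d1 d2,
      refines (fun a => a \in S2) (fun b => b \in S1) c2 c1 d2 d1,
      refines (fun a => a \in S1) (fun b => b \in S1) c1 c1 d1 d1 &
      refines (fun a => a \in S2) (fun b => b \in S2) c2 c2 d2 d2].
Proof.
move=> H.
have l : forall a, a \in S1 -> inl a \in LL S1 S2 by move=> a; rewrite memL_l.
have r : forall a, a \in S2 -> inr a \in LL S1 S2 by move=> a; rewrite memL_r.
have H11 : forall a b, a \in S1 -> b \in S1 -> c1 a = c1 b -> d1 a = d1 b
  by move=> a b ha hb; exact: (H (inl a) (inl b) (l _ ha) (l _ hb)).
have H22 : forall a b, a \in S2 -> b \in S2 -> c2 a = c2 b -> d2 a = d2 b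
  by move=> a b ha hb; exact: (H (inr a) (inr b) (r _ ha) (r _ hb)).
have H12 : forall a b, a \in S1 -> b \in S2 -> c1 a = c2 b -> d1 a = d2 b
  by move=> a b ha hb; exact: (H (inl a) (inr b) (l _ ha) (r _ hb)).
split; split => //.
move=> a b ha hb /esym E; apply/esym; exact: H12.
Qed.

Theorem lemma1 (C1 C2 : eqType)
  (H1 : res_sig C1 -> C1) (H2 : gen_sig C2 -> C2) (c1 : C1) (c2 : C2)
  (hH1 : res_hash_inj H1) (hH2 : gen_hash_inj H2)
  (V1 V2 : finType) (S1 : seq (seq V1)) (S2 : seq (seq V2))
  (hS1 : is_dsc S1) (hS2 : is_dsc S2) :
  distinguishes (res_col H1 c1 S1) S1 (res_col H1 c1 S2) S2 <->
  distinguishes (gen_col H2 c2 S1) S1 (gen_col H2 c2 S2) S2.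
Proof.
have monoR : forall t, subF (LL S1 S2) (sumf (res_col H1 c1 S1 t.+1) (res_col H1 c1 S2 t.+1))
    (sumf (res_col H1 c1 S1 t) (res_col H1 c1 S2 t)).
  move=> t [a|a] [b|b] _ _; rewrite ?sumf_l ?sumf_r => E; exact: (res_mono hH1 E).
have monoG : forall t, subF (LL S1 S2) (sumf (gen_col H2 c2 S1 t.+1) (gen_col H2 c2 S2 t.+1))
    (sumf (gen_col H2 c2 S1 t) (gen_col H2 c2 S2 t)).
  by move=> t [a|a] [b|b] _ _; rewrite ?sumf_l ?sumf_r => E; exact: (gen_mono hH2 E).
rewrite (dist_K monoR) (dist_K monoG).
apply: abstract_main => //.
- by move=> t [a|a] [b|b] _ _; rewrite ?sumf_l ?sumf_r => E; exact: (gen_res c1 hH1 hH2 E).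
- by move=> t [a|a] [b|b] _ _; rewrite ?sumf_l ?sumf_r => E; exact: (res_gen c2 hH1 hH2 E).
- move=> t Hs; have [r12 r21 r11 r22] := refs Hs.
  move=> [a|a] [b|b]; rewrite ?memL_l ?memL_r ?sumf_l ?sumf_r => ha hb E.
  + exact: (res_prop hH1 hS1 hS1 r11 ha hb E).
  + exact: (res_prop hH1 hS1 hS2 r12 ha hb E).
  + exact: (res_prop hH1 hS2 hS1 r21 ha hb E).
  + exact: (res_prop hH1 hS2 hS2 r22 ha hb E).
- move=> t Hs; have [r12 r21 r11 r22] := refs Hs.
  move=> [a|a] [b|b]; rewrite ?memL_l ?memL_r ?sumf_l ?sumf_r => ha hb E.
  + exact: (gen_prop hH2 hS1 hS1 r11 ha hb E).
  + exact: (gen_prop hH2 hS1 hS2 r12 ha hb E).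
  + exact: (gen_prop hH2 hS2 hS1 r21 ha hb E).
  + exact: (gen_prop hH2 hS2 hS2 r22 ha hb E).
Qed.
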